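(* Let $S$ be a numerical semigroup with $\mathrm{l}(S)=3$. Then $\mathrm{t}(S)\in\{2,3,4\}$. Moreover: (a) $\mathrm{t}(S)=2$ iff $\mathrm{h}(S)-\tfrac{\mathrm{F}(S)}{2}\in S$ iff $\mathrm{PF}(S)=\{\mathrm{F}(S),\mathrm{h}(S)\}$; (b) $\mathrm{t}(S)=3$ iff ($\mathrm{h}(S)-\tfrac{\mathrm{F}(S)}{2}\notin S$ and $2\mathrm{h}(S)-\mathrm{F}(S)\in S$) iff $\mathrm{PF}(S)=\{\mathrm{F}(S),\mathrm{h}(S),\tfrac{\mathrm{F}(S)}{2}\}$; (c) $\mathrm{t}(S)=4$ iff $2\mathrm{h}(S)-\mathrm{F}(S)\notin S$ iff $\mathrm{PF}(S)=\{\mathrm{F}(S),\mathrm{h}(S),\tfrac{\mathrm{F}(S)}{2},\mathrm{F}(S)-\mathrm{h}(S)\}$.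
   Context: A numerical semigroup is a subset $S\subseteq\mathbb{N}$ closed under addition with $0\in S$ and $\mathbb{N}\setminus S$ finite; $\mathrm{F}(S)=\max(\mathbb{Z}\setminus S)$. $\mathrm{N}(S)=\{s\in S\mid s<\mathrm{F}(S)\}$, $\mathrm{L}(S)=\{x\in\mathbb{N}\setminus S\mid \mathrm{F}(S)-x\notin \mathrm{N}(S)\}$, $\mathrm{l}(S)=\#\mathrm{L}(S)$. For $\mathrm{l}(S)\ge2$, $\mathrm{h}(S)=\max\{x\in\mathbb{N}\setminus S\mid \mathrm{F}(S)-x\in\mathbb{N}\setminus S,\ x\ne \mathrm{F}(S)/2\}$. $\mathrm{PF}(S)=\{x\in\mathbb{Z}\setminus S\mid x+s\in S \text{ for all } s\in S\setminus\{0\}\}$ and the type is $\mathrm{t}(S)=\#\mathrm{PF}(S)$. *)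

(* Defs.v *)
(* Numerical semigroups are modelled as boolean predicates on nat;
   integer-valued notions (Frobenius number, pseudo-Frobenius numbers) live in int. *)
From HB Require Import structures.
From mathcomp Require Import all_boot all_order all_algebra.
Set Implicit Arguments. Unset Strict Implicit. Unset Printing Implicit Defensive.
Import Order.TTheory GRing.Theory Num.Theory.
Local Open Scope ring_scope.

Definition is_numsg (S : pred nat) : Prop :=
  [/\ S 0%N,
      (forall a b, S a -> S b -> S (a + b)%N) &
      exists N : nat, forall n : nat, (N <= n)%N -> S n].

Definition inS (S : pred nat) (x : int) : bool := (0 <= x) && S `|x|%N.

Definition is_frobenius (S : pred nat) (F : int) : Prop :=
  ~~ inS S F /\ (forall x : int, F < x -> inS S x).

Definition inN (S : pred nat) (F : int) (s : int) : bool := inS S s && (s < F).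

Definition gapN (S : pred nat) (x : int) : bool := (0 <= x) && ~~ inS S x.

Definition inL (S : pred nat) (F : int) (x : int) : Prop :=
  gapN S x /\ ~~ inN S F (F - x).

Definition h_cand (S : pred nat) (F : int) (x : int) : Prop :=
  [/\ gapN S x, gapN S (F - x) & 2 * x != F].
Definition is_h (S : pred nat) (F : int) (h : int) : Prop :=
  h_cand S F h /\ (forall x, h_cand S F x -> x <= h).

Definition inPF (S : pred nat) (x : int) : Prop :=
  ~~ inS S x /\ (forall s : nat, S s -> s <> 0%N -> inS S (x + s%:Z)).

Definition card_is (P : int -> Prop) (n : nat) : Prop :=
  exists l : seq int, [/\ uniq l, (forall x, x \in l <-> P x) & size l = n].

(* Main.v *)
Require Import Defs.
From HB Require Import structures.
From mathcomp Require Import all_boot all_order all_algebra.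
From mathcomp Require Import zify.
Import Order.TTheory GRing.Theory Num.Theory.
Local Open Scope ring_scope.

Lemma inS_ge0 (S : pred nat) x : inS S x -> 0 <= x.
Proof. by case/andP. Qed.

Lemma inS_nat (S : pred nat) (n : nat) : inS S n%:Z = S n.
Proof. by []. Qed.

Lemma inS_add (S : pred nat) x y :
  (forall a b, S a -> S b -> S (a + b)%N) -> inS S x -> inS S y -> inS S (x + y).
Proof.
move=> Hadd; case: x => [a|a] //; case: y => [b|b] //.
rewrite !inS_nat => Ha Hb.
by rewrite /inS /=; apply: Hadd.
Qed.

Lemma inS_split (S : pred nat) x : inS S x -> exists n : nat, x = n%:Z /\ S n.
Proof. by case: x => [a|a] //= Ha; exists a. Qed.

Lemma uniq4 (l : seq int) a b c d :
  uniq [:: a; b; c; d] -> a \in l -> b \in l -> c \in l -> d \in l ->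
  (size l <= 3)%N -> False.
Proof.
move=> U ha hb hc hd hs.
have : (size [:: a; b; c; d] <= size l)%N.
  apply: uniq_leq_size => // x; rewrite !inE => /or4P [] /eqP -> //.
by move=> H; have := leq_trans H hs.
Qed.

Lemma card_uniq (P : int -> Prop) n m : card_is P n -> card_is P m -> n = m.
Proof.
move=> [l1 [u1 m1 <-]] [l2 [u2 m2 <-]].
apply: perm_size; apply: uniq_perm => // x.
apply/idP/idP => H. by apply/m2/m1. by apply/m1/m2.
Qed.

Ltac li :=
  repeat match goal with H : context[inS] |- _ => clear H end;
  try match goal with |- context[inS] => exfalso end;
  lia.

Theorem corollary17 (S : pred nat) (F h : int) :
  is_numsg S -> is_frobenius S F -> card_is (inL S F) 3 -> is_h S F h ->
  [/\ exists t : nat, card_is (inPF S) t /\ (t \in [:: 2%N; 3%N; 4%N]),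
      (* (a) *)
      (card_is (inPF S) 2 <-> inS S (h - (F %/ 2)%Z)) /\
      (inS S (h - (F %/ 2)%Z) <-> (forall x, inPF S x <-> (x = F \/ x = h))),
      (* (b) *)
      (card_is (inPF S) 3 <-> (~~ inS S (h - (F %/ 2)%Z) /\ inS S (2 * h - F))) /\
      ((~~ inS S (h - (F %/ 2)%Z) /\ inS S (2 * h - F)) <->
         (forall x, inPF S x <-> [\/ x = F, x = h | x = (F %/ 2)%Z]))
    & (* (c) *)
      (card_is (inPF S) 4 <-> ~~ inS S (2 * h - F)) /\
      (~~ inS S (2 * h - F) <->
         (forall x, inPF S x <-> [\/ x = F, x = h, x = (F %/ 2)%Z | x = F - h]))].
Proof.
move=> [HS0 Hadd _] [HF Hbig] [l [ul ml sl]] [[gh gFh h2] hmax].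
have S0 : inS S 0 by [].
have Sadd := @inS_add S _ _ Hadd.
pose L' (y : int) := [/\ 0 < y, y < F, ~~ inS S y & ~~ inS S (F - y)].
have Lin : forall y, L' y -> y \in l.
  move=> y [y0 yF ny nFy]; apply/ml; split; first by rewrite /gapN ny andbT ltW.
  by rewrite /inN negb_and nFy.
have hprops : [/\ 0 < h, h < F, ~~ inS S h & ~~ inS S (F - h)].
  move: gh gFh => /andP [h0 nh] /andP [Fh0 nFh].
  have hF : h <= F by rewrite leNgt; apply/negP => /Hbig; apply/negP.
  have hn0 : h != 0 by apply: contraNneq nh => ->.
  have Fhn0 : F - h != 0 by apply: contraNneq nFh => ->.
  split => //; li.
case: hprops => h0 hF nh nFh.
have hcF : h_cand S F (F - h).
  split; rewrite /gapN ?nFh ?andbT; first li.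
  - by rewrite opprB addrC subrK nh; li.
  - li.
have h2F : F < 2 * h by have := hmax _ hcF; li.
have D' : forall y, L' y -> 2 * y != F -> y = h \/ y = F - h.
  move=> y Ly y2.
  have Ly' : L' (F - y).
    case: Ly => *; split => //; try li. by rewrite opprB addrC subrK.
  have hy : y <= h.
    apply: hmax; case: Ly => y0 yF ny nFy; split; rewrite /gapN ?ny ?nFy ?andbT //; li.
  have hFy : F - y <= h.
    apply: hmax; case: Ly' => y0 yF ny nFy; split; rewrite /gapN ?ny ?nFy ?andbT //; li.
  case: (eqVneq y h) => [->|yh]; first by left.
  case: (eqVneq y (F - h)) => [->|yFh]; first by right.
  exfalso; apply: (@uniq4 l h (F - h) y (F - y)).
  - rewrite /= !inE !negb_or /=; apply/and4P; split; try (apply/and3P; split); try (apply/andP; split); try li.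
  - by apply: Lin.
  - apply: Lin; split => //; try li. by rewrite opprB addrC subrK.
  - by apply: Lin.
  - by apply: Lin.
  - by rewrite sl.
have [k [Fk nk]] : exists k, F = 2 * k /\ ~~ inS S k.
  have : ~~ all (mem [:: h; F - h]) l.
    apply/negP => /allP sub.
    have := uniq_leq_size ul sub; rewrite sl /=; li.
  case/allPn => c cl; rewrite /= !inE => /norP [ch cFh].
  case/ml: cl => /andP [c0 nc] nNc.
  have cF : c <= F by rewrite leNgt; apply/negP => /Hbig; apply/negP.
  have cn0 : c != 0 by apply: contraNneq nc => ->.
  have cnF : c != F.
    apply: contraNneq nNc => ->; rewrite subrr /inN S0 /=; li.
  have Lc : L' c.
    split => //; try li.
    move: nNc; rewrite /inN negb_and => /orP [] // ?; li.
  case: (eqVneq (2 * c) F) => [c2|c2].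
    by exists c; split.
  by case: (D' c Lc c2) => E; [move: ch | move: cFh]; rewrite E eqxx.
have Fdiv : (F %/ 2)%Z = k by li.
rewrite Fdiv.
have D : forall y, L' y -> [\/ y = F - h, y = k | y = h].
  move=> y Ly; case: (eqVneq (2 * y) F) => [y2|y2].
    by apply: Or32; li.
  by case: (D' y Ly y2) => ->; [apply: Or33 | apply: Or31].
have PFtest : forall x, L' x ->
   (inPF S x <-> forall y, [\/ y = F - h, y = k | y = h] -> x < y -> ~~ inS S (y - x)).
  move=> x [x0 xF nx nFx]; split.
  - move=> [_ Hpf] y Hy xy; apply/negP => Syx.
    have [n [En Sn]] := @inS_split S _ Syx.
    have n0 : n <> 0%N by move=> n0; move: En; rewrite n0; li.
    have := Hpf n Sn n0; rewrite -En addrC subrK.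
    have ny : ~~ inS S y.
      by case: Hy => ->. 
    by apply/negP.
  - move=> Hy; split => // s Ss s0.
    case: (ltgtP (x + s%:Z) F) => [lt|gt|eq]; last first.
    + by move: nFx; rewrite -eq addrC addKr inS_nat Ss.
    + exact: Hbig.
    + apply/negPn/negP => nxs.
      have Lxs : L' (x + s%:Z).
        split => //; try li.
        apply/negP => H; move/negP: nFx; apply.
        have -> : F - x = (F - (x + s%:Z)) + s%:Z by li.
        by apply: Sadd => //; rewrite inS_nat.
      have Hd := D _ Lxs.
      have := Hy _ Hd; rewrite addrC addrK inS_nat Ss /=.
      move=> H; have H1 : x < s%:Z + x by li.
      by have := H H1.
have Lh : L' h by split.
have Lk : L' k by split => //; try li; rewrite Fk; have -> : 2 * k - k = k by li.
have LFh : L' (F - h) by split => //; try li; rewrite opprB addrC subrK.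
have PFh : inPF S h.
  apply/(PFtest h Lh) => y [] -> ?; li.
have PFk : inPF S k <-> ~~ inS S (h - k).
  rewrite (PFtest k Lk); split.
  - move=> H; have H1 : k < h by li.
    have := H h (Or33 _ _ (erefl h)) H1. done.
  - move=> H y [] -> ?; try li. done.
have hk2 : inS S (h - k) -> inS S (2 * h - F).
  move=> H; have -> : 2 * h - F = (h - k) + (h - k) by li.
  exact: Sadd.
have PFFh : inPF S (F - h) <-> ~~ inS S (2 * h - F).
  rewrite (PFtest _ LFh); split.
  - move=> H; have := H h (Or33 _ _ (erefl h)).
    have -> : h - (F - h) = 2 * h - F by li.
    move=> H1; apply: H1; li.
  - move=> H y [] -> ?; try li.
    + have -> : k - (F - h) = h - k by li.
      by apply: contra H.
    + by have -> : h - (F - h) = 2 * h - F by li.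
have PFF : inPF S F.
  split => // s Ss s0; apply: Hbig; li.
have PFsub : forall x, inPF S x -> [\/ x = F, x = h, x = k | x = F - h].
  move=> x [nx Hpf].
  have xF : x <= F by rewrite leNgt; apply/negP => /Hbig; apply/negP.
  case: (eqVneq x F) => [->|xnF]; first by apply: Or41.
  have nFx : ~~ inS S (F - x).
    apply/negP => H; have [n [En Sn]] := @inS_split S _ H.
    have n0 : n <> 0%N by move=> n0; move: En; rewrite n0; li.
    by move: (Hpf n Sn n0); rewrite -En addrC subrK; apply/negP.
  have x0 : 0 < x.
    rewrite ltNge; apply/negP => x0.
    have xn0 : x != 0 by apply: contraNneq nx => ->.
    move/negP: nFx; apply; apply: Hbig; li.
  have Lx : L' x by split => //; li.
  by case: (D x Lx) => ->; [apply: Or44 | apply: Or43 | apply: Or42].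
have ord1 : F - h < k by li.
have ord2 : k < h by li.
case Ehk: (inS S (h - k)); last case E2: (inS S (2 * h - F)).
-
  have E2 := hk2 Ehk.
  have nPk : ~ inPF S k by move/PFk; rewrite Ehk.
  have nPFh : ~ inPF S (F - h) by move/PFFh; rewrite E2.
  have PFc : forall x, inPF S x <-> (x = F \/ x = h).
    move=> x; split.
    + move=> H; case: (PFsub x H) => E; [by left|by right|exfalso; apply: nPk; by rewrite -E|exfalso; apply: nPFh; by rewrite -E].
    + by case=> ->.
  have C2 : card_is (inPF S) 2.
    exists [:: F; h]; split => //=.
    * by rewrite inE; apply/eqP; li.
    * move=> x; rewrite PFc !inE; split; [by case/orP => /eqP; auto | by case => ->; rewrite eqxx ?orbT].
  split.
  + by exists 2%N.
  + split; split => //; by move=> _.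
  + split; split.
    * by move=> CC; have := @card_uniq _ _ _ C2 CC.
    * by case.
    * by case.
    * move=> H; exfalso; apply: nPk; apply/H; by apply: Or33.
  + split; split.
    * by move=> CC; have := @card_uniq _ _ _ C2 CC.
    * by rewrite E2.
    * by rewrite E2.
    * move=> H; exfalso; apply: nPk; apply/H; by apply: Or43.
-
  have Pk : inPF S k by apply/PFk; rewrite Ehk.
  have nPFh : ~ inPF S (F - h) by move/PFFh; rewrite E2.
  have PFc : forall x, inPF S x <-> [\/ x = F, x = h | x = k].
    move=> x; split.
    + move=> H; case: (PFsub x H) => E; [by apply: Or31|by apply: Or32|by apply: Or33|exfalso; apply: nPFh; by rewrite -E].
    + by case=> ->.
  have C3 : card_is (inPF S) 3.
    exists [:: F; h; k]; split => //=.
    * rewrite !inE; apply/andP; split; [apply/norP; split|]; apply/eqP; li.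
    * move=> x; rewrite PFc !inE; split.
      - by case/or3P => /eqP; [apply: Or31|apply: Or32|apply: Or33].
      - by case=> ->; rewrite eqxx ?orbT.
  split.
  + by exists 3%N.
  + split; split => //.
    * by move=> CC; have := @card_uniq _ _ _ C3 CC.
    * move=> H; have := (H k).1 Pk; case=> E; li.
  + split; split => //.
  + split; split.
    * by move=> CC; have := @card_uniq _ _ _ C3 CC.
    * by [].
    * by [].
    * move=> H; exfalso; apply: nPFh; apply/H; by apply: Or44.
-
  have Pk : inPF S k by apply/PFk; rewrite Ehk.
  have PFh' : inPF S (F - h) by apply/PFFh; rewrite E2.
  have PFc : forall x, inPF S x <-> [\/ x = F, x = h, x = k | x = F - h].
    move=> x; split; [exact: PFsub | by case=> ->].
  have C4 : card_is (inPF S) 4.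
    exists [:: F; h; k; F - h]; split => //=.
    * rewrite !inE; apply/and4P; split; try (apply/and3P; split); try (apply/andP; split); try (apply/norP; split); try (apply/norP; split); apply/eqP; li.
    * move=> x; rewrite PFc !inE; split.
      - by case/or4P => /eqP; [apply: Or41|apply: Or42|apply: Or43|apply: Or44].
      - by case=> ->; rewrite eqxx ?orbT.
  split.
  + by exists 4%N.
  + split; split => //.
    * by move=> CC; have := @card_uniq _ _ _ C4 CC.
    * move=> H; have := (H (F - h)).1 PFh'; case=> E; li.
  + split; split.
    * by move=> CC; have := @card_uniq _ _ _ C4 CC.
    * by case.
    * by case.
    * move=> H; have := (H (F - h)).1 PFh'; case=> E; li.
  + split; split => //.
Qed.
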